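(* Let $S\subseteq G$ and $T:=G\setminus S$ be such that $t\sqsubset s$ for all $t\in T$ and $s\in S$. Then for all $f\in\mathcal{L}(\mathcal{X}_G)$, $$\underline{E}^{\mathrm{irr}}_G(f(X_G))=\underline{E}^{\mathrm{irr}}_T\big(g(X_T)\big),$$ where $g$ is the function on $\mathcal{X}_T$ defined by $g(x_T):=\underline{E}^{\mathrm{irr}}_{S\mid x_{P(S)}}\big(f(X_S,x_T)\big)$, with $x_{P(S)}$ the restriction of $x_T$ to $P(S)$ (note $P(S)\subseteq T$ and $P(T)=\emptyset$ under the hypothesis).
   Context: Setting: $G$ is a finite set of nodes forming a DAG; node $s$ carries a variable $X_s$ with finite nonempty state space $\mathcal{X}_s$; $\mathcal{X}_S=\times_{s\in S}\mathcal{X}_s$; $\mathcal{L}(\mathcal{X}_S)$ denotes real-valued functions on $\mathcal{X}_S$. $P(s)$: parents of $s$; $s\sqsubset v$: there is a directed path of positive length from $s$ to $v$; $D(s)=\{v:s\sqsubset v\}$; $N(s)=G\setminus(\{s\}\cup D(s))$. For $K\subseteq G$: $P(K)=(\bigcup_{s\in K}P(s))\setminus K$. Local models: nonempty closed convex sets $\mathcal{M}_{s\mid x_{P(s)}}$ of probability mass functions on $\mathcal{X}_s$. Full conditional probability measure on finite $\Omega$: $(A,B)\mapsto P(A\mid B)$ ($B\ne\emptyset$) with (F1) $P(\cdot\mid B)$ a probability measure, $P(B\mid B)=1$; (F2) $P(A\cap C\mid B)=P(A\mid C\cap B)P(C\mid B)$ if $C\cap B\neq\emptyset$. Irrelevant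 natural extension $\mathcal{F}^{\mathrm{irr}}_G$: all full conditional probability measures $P$ on $\mathcal{X}_G$ with $P(X_s\mid x_{N(s)})\in\mathcal{M}_{s\mid x_{P(s)}}$ for all $s,x_{N(s)}$. Unconditional lower expectation: $\underline{E}^{\mathrm{irr}}_G(f(X_G))=\inf\{\sum_{z_G}f(z_G)P(z_G):P\in\mathcal{F}^{\mathrm{irr}}_G\}$. Sub-network: for $K\subseteq G$ and fixed $x_{P(K)}$, the credal network on the DAG restricted to $K$ with local credal sets $\mathcal{M}_{s\mid(z_{P(s)\cap K},x_{P(s)\setminus K})}$; its irrelevant natural extension's lower expectation is $\underline{E}^{\mathrm{irr}}_{K\mid x_{P(K)}}$, written $\underline{E}^{\mathrm{irr}}_K$ when $P(K)=\emptyset$. *)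

(* Defs.v *)
From HB Require Import structures.
From Stdlib Require Import Reals.
From mathcomp Require Import all_boot.
Set Implicit Arguments. Unset Strict Implicit. Unset Printing Implicit Defensive.

Local Open Scope R_scope.

Lemma Rplus_assoc' : associative Rplus.
Proof. by move=> a b c; rewrite Rplus_assoc. Qed.
HB.instance Definition _ := Monoid.isComLaw.Build R 0 Rplus Rplus_assoc' Rplus_comm Rplus_0_l.

Definition conf (V : finType) (X : V -> finType) := {dffun forall v : V, X v}.

Definition edgeK (V : finType) (par : V -> {set V}) (K : {set V}) : rel V :=
  fun s v => [&& s \in K, v \in K & s \in par v].

Definition belowK (V : finType) (par : V -> {set V}) (K : {set V}) (s v : V) : bool :=
  [exists u, edgeK par K s u && connect (edgeK par K) u v].

Definition acyclic (V : finType) (par : V -> {set V}) : Prop :=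
  forall s, ~~ belowK par setT s s.

Definition DescK (V : finType) (par : V -> {set V}) (K : {set V}) (s : V) : {set V} :=
  [set v in K | belowK par K s v].
Definition NondescK (V : finType) (par : V -> {set V}) (K : {set V}) (s : V) : {set V} :=
  K :\: (s |: DescK par K s).

Definition is_pmf (T : finType) (p : T -> R) : Prop :=
  (forall a, 0 <= p a) /\ \big[Rplus/0]_(a : T) p a = 1.

Definition credal_set (T : finType) (C : (T -> R) -> Prop) : Prop :=
  (exists p, C p) /\
  (forall p, C p -> is_pmf p) /\
  (forall p q (l : R), C p -> C q -> 0 <= l <= 1 ->
       C (fun a => l * p a + (1 - l) * q a)) /\
  (forall (u : nat -> T -> R) (q : T -> R),
       (forall n, C (u n)) -> (forall a, Un_cv (fun n => u n a) (q a)) -> C q).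

(* M s x = M_{s | x_{P(s)}}: a nonempty closed convex set of pmfs on X_s,
   depending on the joint state x only through x_{P(s)}. *)
Definition local_models (V : finType) (X : V -> finType) (par : V -> {set V})
  (M : forall s : V, conf X -> (X s -> R) -> Prop) : Prop :=
  forall s,
    (forall x, credal_set (M s x)) /\
    (forall x y : conf X, (forall t, t \in par s -> x t = y t) ->
        forall p, M s x p <-> M s y p).

(* A full conditional probability measure on the finite set Om (only its values
   on subsets of Om matter). *)
Definition fcp (C : finType) (Om : {set C}) (P : {set C} -> {set C} -> R) : Prop :=
  forall A B D : {set C}, A \subset Om -> B \subset Om -> D \subset Om -> B != set0 ->
    [/\ 0 <= P A B,
        P Om B = 1,
        P B B = 1,
        [disjoint A & D] -> P (A :|: D) B = P A B + P D B &
        D :&: B != set0 -> P (A :&: D) B = P A (D :&: B) * P D B].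

(* The state space X_K of the sub-network on K with the states outside K fixed
   to those of y is encoded as the set of joint states agreeing with y outside K
   (canonically in bijection with X_K). *)
Definition OmegaK (V : finType) (X : V -> finType) (K : {set V}) (y : conf X)
  : {set conf X} :=
  [set z : conf X | [forall v, (v \notin K) ==> (z v == y v)]].

Definition agree (V : finType) (X : V -> finType) (A : {set V}) (z w : conf X) : bool :=
  [forall v, (v \in A) ==> (z v == w v)].

(* Irrelevant natural extension of the sub-network on K (outside states from y):
   the full conditional probability measures P on X_K such that
   P(X_s | z_{N(s)}) \in M_{s | z_{P(s)}} for all s in K and all z. *)
Definition irr_ext (V : finType) (X : V -> finType) (par : V -> {set V})
  (M : forall s : V, conf X -> (X s -> R) -> Prop) (K : {set V}) (y : conf X)
  (P : {set conf X} -> {set conf X} -> R) : Prop :=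
  fcp (OmegaK K y) P /\
  forall s z, s \in K -> z \in OmegaK K y ->
    M s z (fun a : X s =>
             P [set w in OmegaK K y | w s == a]
               [set w in OmegaK K y | agree (NondescK par K s) z w]).

Definition expect (C : finType) (Om : {set C}) (P : {set C} -> {set C} -> R)
  (f : C -> R) : R :=
  \big[Rplus/0]_(z in Om) (f z * P [set z] Om).

Definition is_inf (A : R -> Prop) (r : R) : Prop :=
  (forall e, A e -> r <= e) /\ (forall r', (forall e, A e -> r' <= e) -> r' <= r).

Definition lower_exp (V : finType) (X : V -> finType) (par : V -> {set V})
  (M : forall s : V, conf X -> (X s -> R) -> Prop) (K : {set V}) (y : conf X)
  (f : conf X -> R) (r : R) : Prop :=
  is_inf (fun e => exists P, irr_ext par M K y P /\ e = expect (OmegaK K y) P f) r.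

(* Main.v *)
Require Import Defs.
From HB Require Import structures.
From Stdlib Require Import Reals.
From mathcomp Require Import all_boot.
From Stdlib Require Import Lra Classical FunctionalExtensionality ClassicalEpsilon.
Set Implicit Arguments. Unset Strict Implicit. Unset Printing Implicit Defensive.
Local Open Scope R_scope.

Lemma fcp_empty (C : finType) (Om : {set C}) P (H : fcp Om P) (B : {set C}) :
  B \subset Om -> B != set0 -> P set0 B = 0.
Proof.
move=> sB nB; have [_ _ _ Hadd _] := H set0 B set0 (sub0set Om) sB (sub0set Om) nB.
have := Hadd; rewrite -setI_eq0 setI0 eqxx setU0 => /(_ isT); lra.
Qed.

Lemma fcp_capB (C : finType) (Om : {set C}) P (H : fcp Om P) (A B : {set C}) :
  A \subset Om -> B \subset Om -> B != set0 -> P A B = P (A :&: B) B.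
Proof.
move=> sA sB nB; have [_ _ HBB _ Hp] := H A B B sA sB sB nB.
by rewrite Hp ?setIid // HBB Rmult_1_r.
Qed.

Lemma fcp_mono (C : finType) (Om : {set C}) P (H : fcp Om P) (A A' B : {set C}) :
  A \subset A' -> A' \subset Om -> B \subset Om -> B != set0 -> P A B <= P A' B.
Proof.
move=> sAA sA' sB nB.
have sA : A \subset Om := subset_trans sAA sA'.
have sD : A' :\: A \subset Om := subset_trans (subsetDl _ _) sA'.
have [_ _ _ Hadd _] := H A B (A' :\: A) sA sB sD nB.
have [H0 _ _ _ _] := H (A' :\: A) B A sD sB sA nB.
have eA : A :|: (A' :\: A) = A'.
  by apply/setP=> z; rewrite !inE; case: (boolP (z \in A)) => zA //=; rewrite (subsetP sAA z zA).
rewrite -eA Hadd; first lra.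
by rewrite -setI_eq0; apply/eqP/setP=> z; rewrite !inE; case: (z \in A); rewrite ?andbF.
Qed.

Lemma fcp_le1 (C : finType) (Om : {set C}) P (H : fcp Om P) (A B : {set C}) :
  A \subset Om -> B \subset Om -> B != set0 -> P A B <= 1.
Proof.
move=> sA sB nB; have [_ HOm _ _ _] := H A B A sA sB sA nB.
rewrite -HOm; exact: (fcp_mono H sA (subxx Om) sB nB).
Qed.

Lemma fcp_ge0 (C : finType) (Om : {set C}) P (H : fcp Om P) (A B : {set C}) :
  A \subset Om -> B \subset Om -> B != set0 -> 0 <= P A B.
Proof. by move=> sA sB nB; have [] := H A B A sA sB sA nB. Qed.

Lemma fcp_single0 (C : finType) (Om : {set C}) P (H : fcp Om P) (x : C) (B : {set C}) :
  x \in Om -> x \notin B -> B \subset Om -> B != set0 -> P [set x] B = 0.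
Proof.
move=> xO xB sB nB; rewrite (fcp_capB H) ?sub1set //.
have -> : [set x] :&: B = set0.
  by apply/setP=> z; rewrite !inE; case: eqP => // ->; rewrite (negbTE xB).
exact: fcp_empty H _ sB nB.
Qed.

Lemma fcp_sum1 (C : finType) (Om : {set C}) P (H : fcp Om P) (B : {set C}) :
  B \subset Om -> B != set0 ->
  forall A : {set C}, A \subset Om -> P A B = \big[Rplus/0]_(x in A) P [set x] B.
Proof.
move=> sB nB A; move: {2}#|A| (erefl #|A|) => n; elim: n A => [|n IH] A cA sA.
  move/eqP: cA; rewrite cards_eq0 => /eqP ->.
  by rewrite big_set0 (fcp_empty H sB nB).
have [x xA] : exists x, x \in A.
  by apply/set0Pn; rewrite -card_gt0 cA.
rewrite (bigD1 x xA) /=.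
have sAx : A :\ x \subset Om := subset_trans (subsetDl _ _) sA.
have sx : [set x] \subset Om by rewrite sub1set (subsetP sA).
have [_ _ _ Hadd _] := H [set x] B (A :\ x) sx sB sAx nB.
rewrite -(setD1K xA) Hadd; last by rewrite disjoints_subset sub1set !inE eqxx.
rewrite setD1K // (IH (A :\ x)) //; last by move: cA; rewrite (cardsD1 x A) xA add1n => -[].
idtac.
congr (_ + _); apply: eq_bigl => z; rewrite !inE andbC //.
Qed.

Lemma Rsum_mull (I : Type) (r : seq I) (P : pred I) (F : I -> R) (c : R) :
  c * \big[Rplus/0]_(i <- r | P i) F i = \big[Rplus/0]_(i <- r | P i) (c * F i).
Proof. by elim/big_rec2: _ => [|i y1 y2 _ <-]; ring. Qed.

Lemma Rsum_mulr (I : Type) (r : seq I) (P : pred I) (F : I -> R) (c : R) :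
  \big[Rplus/0]_(i <- r | P i) F i * c = \big[Rplus/0]_(i <- r | P i) (F i * c).
Proof. by elim/big_rec2: _ => [|i y1 y2 _ <-]; ring. Qed.

Lemma Rsum_le (I : Type) (r : seq I) (P : pred I) (F G : I -> R) :
  (forall i, P i -> F i <= G i) ->
  \big[Rplus/0]_(i <- r | P i) F i <= \big[Rplus/0]_(i <- r | P i) G i.
Proof. by move=> H; elim/big_rec2: _ => [|i y1 y2 Pi Hy]; [lra | have := H i Pi; lra]. Qed.

Lemma Rsum_ge0 (I : Type) (r : seq I) (P : pred I) (F : I -> R) :
  (forall i, P i -> 0 <= F i) -> 0 <= \big[Rplus/0]_(i <- r | P i) F i.
Proof. by move=> H; elim/big_rec: _ => [|i y Pi Hy]; [lra | have := H i Pi; lra]. Qed.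

Lemma edgeK_sub (V : finType) (par : V -> {set V}) (K : {set V}) s v :
  edgeK par K s v -> edgeK par setT s v.
Proof. by case/and3P=> _ _ h; rewrite /edgeK !inE. Qed.

Lemma belowK_sub (V : finType) (par : V -> {set V}) (K : {set V}) s v :
  belowK par K s v -> belowK par setT s v.
Proof.
case/existsP=> u /andP[e c]; apply/existsP; exists u; rewrite (edgeK_sub e) /=.
apply: connect_sub c => a b /edgeK_sub h; exact: connect1.
Qed.

Lemma below_connect (V : finType) (par : V -> {set V}) s v :
  belowK par setT s v -> connect (edgeK par setT) s v.
Proof. by case/existsP=> u /andP[e c]; apply: connect_trans (connect1 e) c. Qed.

Lemma below_trans (V : finType) (par : V -> {set V}) s u v :
  belowK par setT s u -> connect (edgeK par setT) u v -> belowK par setT s v.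
Proof.
case/existsP=> w /andP[e c] c'; apply/existsP; exists w; rewrite e /=.
exact: connect_trans c c'.
Qed.

Lemma connect_restrict (V : finType) (par : V -> {set V}) (K : {set V}) u v :
  connect (edgeK par setT) u v ->
  (forall w, connect (edgeK par setT) u w -> connect (edgeK par setT) w v -> w \in K) ->
  connect (edgeK par K) u v.
Proof.
case/connectP=> p; elim: p u => [|w p IH] u /=; first by move=> _ -> _; exact: connect0.
case/andP=> euw pw ev Hw.
have cwv : connect (edgeK par setT) w v by apply/connectP; exists p.
have cuv : connect (edgeK par setT) u v := connect_trans (connect1 euw) cwv.
apply: connect_trans (connect1 _) (IH w pw ev _).
  have := euw; rewrite /edgeK !inE /= => ->.
  by rewrite (Hw u (connect0 _ _) cuv) (Hw w (connect1 euw) cwv).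
by move=> w' c1 c2; apply: Hw (connect_trans (connect1 euw) c1) c2.
Qed.

Lemma below_restrict (V : finType) (par : V -> {set V}) (K : {set V}) s v :
  belowK par setT s v -> s \in K ->
  (forall w, belowK par setT s w -> connect (edgeK par setT) w v -> w \in K) ->
  belowK par K s v.
Proof.
case/existsP=> u /andP[esu cuv] sK Hw.
have bsu : belowK par setT s u by apply/existsP; exists u; rewrite esu connect0.
apply/existsP; exists u; apply/andP; split.
  by move: esu; rewrite /edgeK !inE /= => ->; rewrite sK (Hw u bsu cuv).
apply: connect_restrict cuv _ => w c1 c2; apply: Hw c2.
exact: below_trans bsu c1.
Qed.

Lemma NG_S (V : finType) (par : V -> {set V}) (S : {set V})
  (Hdag : acyclic par)
  (HST : forall t s, t \in ~: S -> s \in S -> belowK par setT t s) s v :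
  s \in S -> (v \in NondescK par setT s) = (v \notin S) || (v \in NondescK par S s).
Proof.
move=> sS.
have down : forall w, belowK par setT s w -> w \in S.
  move=> w bw; apply/negPn/negP => wS.
  have := HST w s; rewrite inE => /(_ wS sS) bws.
  by have := Hdag s; rewrite (below_trans bw (below_connect bws)).
rewrite /NondescK /DescK !inE.
case: (boolP (v \in S)) => vS /=.
  rewrite !andbT; congr (~~ (_ || _)).
  apply/idP/idP; first by move=> h; apply: below_restrict h sS (fun w b _ => down w b).
  exact: belowK_sub.
rewrite andbT; apply/negP => /orP[/eqP vs|b]; first by rewrite vs sS in vS.
by rewrite (down v b) in vS.
Qed.

Lemma NG_T (V : finType) (par : V -> {set V}) (S : {set V})
  (Hdag : acyclic par)
  (HST : forall t s, t \in ~: S -> s \in S -> belowK par setT t s) t v :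
  t \in ~: S -> (v \in NondescK par setT t) = (v \in NondescK par (~: S) t).
Proof.
move=> tT; rewrite /NondescK /DescK !inE.
case: (boolP (v \in S)) => vS /=.
  by rewrite (HST t v tT vS) orbT andbF.
rewrite !andbT; congr (~~ (_ || _)).
apply/idP/idP; last exact: belowK_sub.
move=> h; apply: below_restrict h tT _ => w _ cwv; rewrite inE.
apply/negP => wS; have := HST v w; rewrite inE => /(_ vS wS) bvw.
by have := Hdag v; rewrite (below_trans bvw cwv).
Qed.

Lemma par_T (V : finType) (par : V -> {set V}) (S : {set V})
  (Hdag : acyclic par)
  (HST : forall t s, t \in ~: S -> s \in S -> belowK par setT t s) t u :
  t \in ~: S -> u \in par t -> u \in ~: S.
Proof.
move=> tT ut; rewrite inE; apply/negP => uS.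
have but : belowK par setT u t.
  by apply/existsP; exists t; rewrite /edgeK !inE ut connect0.
have := HST t u tT uS => btu.
by have := Hdag t; rewrite (below_trans btu (below_connect but)).
Qed.

Definition mrg (V : finType) (X : V -> finType) (S : {set V}) (a b : conf X) : conf X :=
  finfun (fun v => if v \in S then a v else b v).

Lemma mrgE (V : finType) (X : V -> finType) (S : {set V}) (a b : conf X) v :
  mrg S a b v = if v \in S then a v else b v.
Proof. by rewrite /mrg ffunE. Qed.

Lemma inOm (V : finType) (X : V -> finType) (K : {set V}) (y z : conf X) :
  (z \in OmegaK K y) = [forall v, (v \notin K) ==> (z v == y v)].
Proof. by rewrite /OmegaK inE. Qed.

Lemma inOmP (V : finType) (X : V -> finType) (K : {set V}) (y z : conf X) :
  reflect (forall v, v \notin K -> z v = y v) (z \in OmegaK K y).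
Proof.
rewrite inOm; apply: (iffP forallP) => H v.
  by move=> vK; move/implyP: (H v) => /(_ vK) /eqP.
by apply/implyP => vK; rewrite (H v vK).
Qed.

Lemma OmT (V : finType) (X : V -> finType) (y : conf X) : OmegaK setT y = setT.
Proof. by apply/setP=> z; rewrite in_setT; apply/inOmP => v; rewrite inE. Qed.

Lemma mrg_OT (V : finType) (X : V -> finType) (S : {set V}) (y z : conf X) :
  mrg S y z \in OmegaK (~: S) y.
Proof. by apply/inOmP => v; rewrite inE negbK mrgE => ->. Qed.

Lemma inOS_mrg (V : finType) (X : V -> finType) (S : {set V}) (y x z : conf X) :
  x \in OmegaK (~: S) y -> (z \in OmegaK S x) = (mrg S y z == x).
Proof.
move/inOmP=> Hx; apply/inOmP/eqP => [Hz|<- v vS].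
  apply/ffunP => v; rewrite mrgE; case: ifP => vS.
    by rewrite Hx // inE vS.
  by rewrite Hz // vS.
by rewrite mrgE (negbTE vS).
Qed.

Lemma mrg_id (V : finType) (X : V -> finType) (S : {set V}) (y x : conf X) :
  x \in OmegaK (~: S) y -> mrg S y x = x.
Proof. by move=> Hx; apply/eqP; rewrite -inOS_mrg //; apply/inOmP. Qed.

Lemma OS_self (V : finType) (X : V -> finType) (S : {set V}) (x : conf X) :
  x \in OmegaK S x.
Proof. by apply/inOmP. Qed.

Lemma OS_eq (V : finType) (X : V -> finType) (S : {set V}) (x z : conf X) :
  z \in OmegaK S x -> OmegaK S z = OmegaK S x.
Proof.
move/inOmP=> Hz; apply/setP=> w; apply/inOmP/inOmP => Hw v vS.
  by rewrite Hw // Hz.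
by rewrite Hw // Hz.
Qed.

Definition projT (V : finType) (X : V -> finType) (S : {set V}) (y : conf X)
  (B : {set conf X}) : {set conf X} := [set mrg S y z | z in B].

Lemma projT_sub (V : finType) (X : V -> finType) (S : {set V}) (y : conf X) (B : {set conf X}) :
  projT S y B \subset OmegaK (~: S) y.
Proof. by apply/subsetP=> x /imsetP[z _ ->]; apply: mrg_OT. Qed.

Lemma in_projT (V : finType) (X : V -> finType) (S : {set V}) (y x : conf X) (B : {set conf X}) :
  x \in OmegaK (~: S) y -> (x \in projT S y B) = (B :&: OmegaK S x != set0).
Proof.
move=> Hx; apply/imsetP/set0Pn => [[z zB ->]|[z]].
  by exists z; rewrite in_setI zB (inOS_mrg _ (mrg_OT S y z)) eqxx.
by rewrite in_setI (inOS_mrg _ Hx) => /andP[zB /eqP <-]; exists z.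
Qed.

Lemma projT_n0 (V : finType) (X : V -> finType) (S : {set V}) (y : conf X) (B : {set conf X}) :
  B != set0 -> projT S y B != set0.
Proof. by case/set0Pn=> z zB; apply/set0Pn; exists (mrg S y z); apply: imset_f. Qed.

Lemma projT_mono (V : finType) (X : V -> finType) (S : {set V}) (y : conf X) (A B : {set conf X}) :
  A \subset B -> projT S y A \subset projT S y B.
Proof. exact: imsetS. Qed.

Lemma pick_sub (T : finType) (R1 R2 : {set T}) a :
  R1 \subset R2 -> [pick x in R2] = Some a -> a \in R1 -> [pick x in R1] = Some a.
Proof.
move=> s12; rewrite /pick /enum_mem.
elim: (Finite.enum T) => [|b s IH] //=.
case: ifP => b2 /=.
  case=> <- b1; by rewrite unfold_in b1.
move=> h a1; have b1 : (b \in R1) = false.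
  have b2' : (b \in R2) = false by exact: b2.
  by apply/negbTE/negP => /(subsetP s12); rewrite b2'.
by rewrite unfold_in b1 IH.
Qed.

Definition Rltb (a b : R) : bool := if Rlt_dec a b then true else false.
Lemma RltbP a b : reflect (a < b) (Rltb a b).
Proof. by rewrite /Rltb; case: Rlt_dec => h; constructor. Qed.


Definition wgt (V : finType) (X : V -> finType) (S : {set V})
  (Px : conf X -> {set conf X} -> {set conf X} -> R) (x : conf X) (E : {set conf X}) : R :=
  Px x (E :&: OmegaK S x) (OmegaK S x).

Definition Nsum (V : finType) (X : V -> finType) (S : {set V}) (y : conf X)
  (Q : {set conf X} -> {set conf X} -> R)
  (Px : conf X -> {set conf X} -> {set conf X} -> R) (B : {set conf X}) : R :=
  \big[Rplus/0]_(x in OmegaK (~: S) y) (Q [set x] (projT S y B) * wgt S Px x B).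

Definition numr (V : finType) (X : V -> finType) (S : {set V}) (y : conf X)
  (Q : {set conf X} -> {set conf X} -> R)
  (Px : conf X -> {set conf X} -> {set conf X} -> R) (A B : {set conf X}) : R :=
  \big[Rplus/0]_(x in OmegaK (~: S) y) (Q [set x] (projT S y B) * wgt S Px x (A :&: B)).

Definition Rset (V : finType) (X : V -> finType) (S : {set V}) (y : conf X)
  (Q : {set conf X} -> {set conf X} -> R) (B : {set conf X}) : {set conf X} :=
  [set x in projT S y B | Rltb 0 (Q [set x] (projT S y B))].

Definition xs (V : finType) (X : V -> finType) (S : {set V}) (y : conf X)
  (Q : {set conf X} -> {set conf X} -> R) (B : {set conf X}) : conf X :=
  odflt y [pick x in Rset S y Q B].

Definition Pc (V : finType) (X : V -> finType) (S : {set V}) (y : conf X)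
  (Q : {set conf X} -> {set conf X} -> R)
  (Px : conf X -> {set conf X} -> {set conf X} -> R) (A B : {set conf X}) : R :=
  if Rlt_dec 0 (Nsum S y Q Px B) then numr S y Q Px A B / Nsum S y Q Px B
  else Px (xs S y Q B) (A :&: OmegaK S (xs S y Q B)) (B :&: OmegaK S (xs S y Q B)).

Lemma OS_n0 (V : finType) (X : V -> finType) (S : {set V}) (x : conf X) :
  OmegaK S x != set0.
Proof. by apply/set0Pn; exists x; apply: OS_self. Qed.

Lemma wgt_ge0 (V : finType) (X : V -> finType) (S : {set V}) Px
  (HP : forall x : conf X, fcp (OmegaK S x) (Px x)) x E : 0 <= wgt S Px x E.
Proof. exact: (fcp_ge0 (HP x) (subsetIr E (OmegaK S x)) (subxx _) (OS_n0 S x)). Qed.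

Lemma wgt_mono (V : finType) (X : V -> finType) (S : {set V}) Px
  (HP : forall x : conf X, fcp (OmegaK S x) (Px x)) x (E E' : {set conf X}) :
  E \subset E' -> wgt S Px x E <= wgt S Px x E'.
Proof.
move=> sE; rewrite /wgt; apply: (fcp_mono (HP x) (setSI (OmegaK S x) sE) (subsetIr E' (OmegaK S x)) (subxx _) (OS_n0 S x)).
Qed.

Lemma wgt_0 (V : finType) (X : V -> finType) (S : {set V}) Px
  (HP : forall x : conf X, fcp (OmegaK S x) (Px x)) x (E : {set conf X}) :
  E :&: OmegaK S x = set0 -> wgt S Px x E = 0.
Proof. by move=> h; rewrite /wgt h (fcp_empty (HP x) (subxx _) (OS_n0 S x)). Qed.

Lemma wgt_1 (V : finType) (X : V -> finType) (S : {set V}) Px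
  (HP : forall x : conf X, fcp (OmegaK S x) (Px x)) x (E : {set conf X}) :
  OmegaK S x \subset E -> wgt S Px x E = 1.
Proof.
move=> h; rewrite /wgt (setIidPr h).
by have [] := HP x _ _ _ (subxx _) (subxx _) (subxx _) (OS_n0 S x).
Qed.

Lemma Qx_ge0 (V : finType) (X : V -> finType) (S : {set V}) (y : conf X) Q
  (HQ : fcp (OmegaK (~: S) y) Q) x (B : {set conf X}) :
  x \in OmegaK (~: S) y -> B != set0 -> 0 <= Q [set x] (projT S y B).
Proof.
move=> xO nB; have h : [set x] \subset OmegaK (~: S) y by rewrite sub1set.
exact: (fcp_ge0 HQ h (projT_sub S y B) (projT_n0 S y nB)).
Qed.

Lemma Q0 (V : finType) (X : V -> finType) (S : {set V}) (y : conf X) Q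
  (HQ : fcp (OmegaK (~: S) y) Q) x (B : {set conf X}) :
  x \in OmegaK (~: S) y -> x \notin projT S y B -> B != set0 -> Q [set x] (projT S y B) = 0.
Proof. by move=> xO xB nB; apply: (fcp_single0 HQ xO xB (projT_sub S y B) (projT_n0 S y nB)). Qed.

Lemma Nsum_ge0 (V : finType) (X : V -> finType) (S : {set V}) (y : conf X) Q Px
  (HQ : fcp (OmegaK (~: S) y) Q) (HP : forall x : conf X, fcp (OmegaK S x) (Px x))
  (B : {set conf X}) : B != set0 -> 0 <= Nsum S y Q Px B.
Proof.
move=> nB; apply: Rsum_ge0 => x xO; apply: Rmult_le_pos.
  exact: (Qx_ge0 HQ xO nB).
exact: (wgt_ge0 HP x B).
Qed.

Lemma numr_ge0 (V : finType) (X : V -> finType) (S : {set V}) (y : conf X) Q Px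
  (HQ : fcp (OmegaK (~: S) y) Q) (HP : forall x : conf X, fcp (OmegaK S x) (Px x))
  (A B : {set conf X}) : B != set0 -> 0 <= numr S y Q Px A B.
Proof.
move=> nB; apply: Rsum_ge0 => x xO; apply: Rmult_le_pos.
  exact: (Qx_ge0 HQ xO nB).
exact: (wgt_ge0 HP x _).
Qed.

Lemma numr_le (V : finType) (X : V -> finType) (S : {set V}) (y : conf X) Q Px
  (HQ : fcp (OmegaK (~: S) y) Q) (HP : forall x : conf X, fcp (OmegaK S x) (Px x))
  (A B : {set conf X}) : B != set0 -> numr S y Q Px A B <= Nsum S y Q Px B.
Proof.
move=> nB; apply: Rsum_le => x xO; apply: Rmult_le_compat_l.
  exact: (Qx_ge0 HQ xO nB).
exact: (wgt_mono HP x (subsetIr A B)).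
Qed.

Lemma xs_in (V : finType) (X : V -> finType) (S : {set V}) (y : conf X) Q
  (HQ : fcp (OmegaK (~: S) y) Q) (B : {set conf X}) :
  B != set0 -> xs S y Q B \in Rset S y Q B.
Proof.
move=> nB; rewrite /xs; case: pickP => [a Ha //|none].
have sp := projT_sub S y B; have np := projT_n0 S y nB.
have [_ _ H1 _ _] := HQ _ _ _ sp sp sp np.
rewrite (fcp_sum1 HQ sp np sp) big1 in H1; first lra.
move=> x xp; have := none x; rewrite inE xp /= => /negbT/RltbP h.
have := Qx_ge0 HQ (subsetP sp x xp) nB; lra.
Qed.

Lemma Qrel (V : finType) (X : V -> finType) (S : {set V}) (y : conf X) Q
  (HQ : fcp (OmegaK (~: S) y) Q) (D B : {set conf X}) x :
  D :&: B != set0 -> x \in projT S y (D :&: B) ->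
  Q [set x] (projT S y B) = Q (projT S y (D :&: B)) (projT S y B) * Q [set x] (projT S y (D :&: B)).
Proof.
move=> nDB xp.
have nB : B != set0 by apply: contraNneq nDB => ->; rewrite setI0.
have sDB : projT S y (D :&: B) \subset projT S y B by apply: projT_mono; exact: subsetIr.
have xO : x \in OmegaK (~: S) y := subsetP (projT_sub S y _) x xp.
have sx : [set x] \subset OmegaK (~: S) y by rewrite sub1set.
have [_ _ _ _ Hp] := HQ _ _ _ sx (projT_sub S y B) (projT_sub S y (D :&: B)) (projT_n0 S y nB).
rewrite (setIidPl sDB) in Hp.
rewrite Rmult_comm -Hp ?(projT_n0 S y nDB) //.
by rewrite (setIidPl _) // sub1set.
Qed.

Lemma key_c (V : finType) (X : V -> finType) (S : {set V}) (y : conf X) Q Px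
  (HQ : fcp (OmegaK (~: S) y) Q) (HP : forall x : conf X, fcp (OmegaK S x) (Px x))
  (D B F : {set conf X}) :
  D :&: B != set0 -> F \subset D :&: B ->
  \big[Rplus/0]_(x in OmegaK (~: S) y) (Q [set x] (projT S y B) * wgt S Px x F) =
  Q (projT S y (D :&: B)) (projT S y B) *
  \big[Rplus/0]_(x in OmegaK (~: S) y) (Q [set x] (projT S y (D :&: B)) * wgt S Px x F).
Proof.
move=> nDB sF; rewrite Rsum_mull; apply: eq_bigr => x xO.
case: (boolP (x \in projT S y (D :&: B))) => xp.
  by rewrite (Qrel HQ nDB xp); ring.
rewrite (wgt_0 HP); first ring.
move: xp; rewrite (in_projT _ xO) negbK => /eqP h.
by apply/eqP; rewrite -subset0 -h setSI.
Qed.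

Lemma pick_some (V : finType) (X : V -> finType) (S : {set V}) (y : conf X) Q
  (HQ : fcp (OmegaK (~: S) y) Q) (B : {set conf X}) :
  B != set0 -> [pick x in Rset S y Q B] = Some (xs S y Q B).
Proof.
move=> nB; rewrite /xs; case: pickP => [a Ha //|none].
have sp := projT_sub S y B; have np := projT_n0 S y nB.
have [_ _ H1 _ _] := HQ _ _ _ sp sp sp np.
rewrite (fcp_sum1 HQ sp np sp) big1 in H1; first lra.
move=> x xp; have := none x; rewrite inE xp /= => /negbT/RltbP h.
have := Qx_ge0 HQ (subsetP sp x xp) nB; lra.
Qed.

Lemma xs_props (V : finType) (X : V -> finType) (S : {set V}) (y : conf X) Q
  (HQ : fcp (OmegaK (~: S) y) Q) (B : {set conf X}) :
  B != set0 ->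
  [/\ xs S y Q B \in projT S y B, xs S y Q B \in OmegaK (~: S) y,
      B :&: OmegaK S (xs S y Q B) != set0 & 0 < Q [set xs S y Q B] (projT S y B)].
Proof.
move=> nB; have := pick_some HQ nB; case: pickP => // a Ha [<-].
move: Ha; rewrite inE => /andP[ap /RltbP h].
have aO := subsetP (projT_sub S y B) a ap.
by split => //; rewrite -(in_projT _ aO).
Qed.

Lemma Pc_fcp (V : finType) (X : V -> finType) (S : {set V}) (y : conf X) Q Px
  (HQ : fcp (OmegaK (~: S) y) Q) (HP : forall x : conf X, fcp (OmegaK S x) (Px x)) :
  fcp setT (Pc S y Q Px).
Proof.
move=> A B D _ _ _ nB.
have [xp xO nBx Qpos] := xs_props HQ nB.
set x0 := xs S y Q B in xp xO nBx Qpos *.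
have sBx : B :&: OmegaK S x0 \subset OmegaK S x0 := subsetIr _ _.
have NB0 := Nsum_ge0 HQ HP nB.
rewrite /Pc -/x0.
split.
- case: Rlt_dec => h /=.
    apply: Rmult_le_pos; first exact: (numr_ge0 HQ HP A nB).
    by left; apply: Rinv_0_lt_compat.
  exact: (fcp_ge0 (HP x0) (subsetIr A _) sBx nBx).
- case: Rlt_dec => h /=.
    rewrite /numr setTI -/(Nsum S y Q Px B); field; lra.
  rewrite setTI; by have [] := HP x0 _ _ _ sBx sBx sBx nBx.
- case: Rlt_dec => h /=.
    rewrite /numr setIid -/(Nsum S y Q Px B); field; lra.
  by have [] := HP x0 _ _ _ sBx sBx sBx nBx.
- move=> dAD; case: Rlt_dec => h /=.
    rewrite /numr -Rdiv_plus_distr -big_split /=; congr (_ / _).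
    apply: eq_bigr => x _; rewrite -Rmult_plus_distr_l; congr (_ * _).
    rewrite /wgt setIUl setIUl.
    have sOx := subxx (OmegaK S x).
    have [_ _ _ Hadd _] := HP x (A :&: B :&: OmegaK S x) (OmegaK S x) (D :&: B :&: OmegaK S x)
      (subsetIr _ _) sOx (subsetIr _ _) (OS_n0 S x).
    apply: Hadd; apply: (disjointW _ _ dAD); rewrite -setIA; exact: subsetIl.
  rewrite setIUl.
  have [_ _ _ Hadd _] := HP x0 (A :&: OmegaK S x0) (B :&: OmegaK S x0) (D :&: OmegaK S x0)
      (subsetIr _ _) sBx (subsetIr _ _) nBx.
  by apply: Hadd; apply: (disjointW _ _ dAD); exact: subsetIl.
- move=> nDB.
  set c := Q (projT S y (D :&: B)) (projT S y B).
  have K1 : numr S y Q Px (A :&: D) B = c * numr S y Q Px A (D :&: B).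
    rewrite /numr -setIA; exact: (key_c HQ HP nDB (subsetIr A (D :&: B))).
  have K2 : numr S y Q Px D B = c * Nsum S y Q Px (D :&: B).
    rewrite /numr /Nsum; exact: (key_c HQ HP nDB (subxx _)).
  have NDB0 := Nsum_ge0 HQ HP nDB.
  have ADB0 := numr_ge0 HQ HP A nDB; have ADBle := numr_le HQ HP A nDB.
  have DB0 := numr_ge0 HQ HP D nB; have DBle := numr_le HQ HP D nB.
  have c0 : 0 <= c := fcp_ge0 HQ (projT_sub S y _) (projT_sub S y B) (projT_n0 S y nB).
  case: Rlt_dec => hB /=.
    rewrite K1 K2; case: Rlt_dec => hDB /=.
      field; lra.
    have e : Nsum S y Q Px (D :&: B) = 0 by lra.
    have e2 : numr S y Q Px A (D :&: B) = 0 by lra.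
    by rewrite e2 e /Rdiv; ring.
  have NB : Nsum S y Q Px B = 0 by lra.
  have ODB : D :&: OmegaK S x0 :&: (B :&: OmegaK S x0) = D :&: B :&: OmegaK S x0.
    by rewrite setIACA setIid.
  have OAD : A :&: OmegaK S x0 :&: (D :&: OmegaK S x0) = A :&: D :&: OmegaK S x0.
    by rewrite setIACA setIid.
  case: (boolP (x0 \in projT S y (D :&: B))) => x0p.
    have Qe := Qrel HQ nDB x0p; rewrite -/c in Qe.
    have q0 := Qx_ge0 HQ xO nDB; unfold reverse_coercion in *.
    have cpos : 0 < c.
      apply: Rnot_le_lt => hc; have ec : c = 0 by lra.
      by move: Qpos; rewrite Qe ec Rmult_0_l; lra.
    have qpos : 0 < Q [set x0] (projT S y (D :&: B)).
      apply: Rnot_le_lt => hc; have ec : Q [set x0] (projT S y (D :&: B)) = 0 by lra.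
      by move: Qpos; rewrite Qe ec Rmult_0_r; lra.
    have NDB : Nsum S y Q Px (D :&: B) = 0 by nra.
    case: Rlt_dec => hDB /=; first lra.
    have ex : xs S y Q (D :&: B) = x0.
      have sR : Rset S y Q (D :&: B) \subset Rset S y Q B.
        apply/subsetP => x; rewrite !inE => /andP[xq /RltbP hx].
        rewrite (subsetP (projT_mono S y (subsetIr D B)) x xq) /=; apply/RltbP.
        rewrite (Qrel HQ nDB xq) -/c; unfold reverse_coercion in *; nra.
      have x0R : x0 \in Rset S y Q (D :&: B) by rewrite inE x0p; apply/RltbP.
      have := pick_sub sR (pick_some HQ nB) x0R.
      by rewrite (pick_some HQ nDB) => -[].
    rewrite ex.
    have nn : D :&: OmegaK S x0 :&: (B :&: OmegaK S x0) != set0.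
      by rewrite ODB -(in_projT _ xO).
    have [_ _ _ _ Hp] := HP x0 (A :&: OmegaK S x0) (B :&: OmegaK S x0) (D :&: OmegaK S x0)
      (subsetIr _ _) sBx (subsetIr _ _) nBx.
    by rewrite -OAD (Hp nn) ODB.
  have h0 : D :&: B :&: OmegaK S x0 = set0.
    by apply/eqP; move: x0p; rewrite (in_projT _ xO) negbK.
  have e1 : Px x0 (D :&: OmegaK S x0) (B :&: OmegaK S x0) = 0.
    rewrite (fcp_capB (HP x0) (subsetIr D _) sBx nBx) ODB h0.
    exact: (fcp_empty (HP x0) sBx nBx).
  have e2 : Px x0 (A :&: D :&: OmegaK S x0) (B :&: OmegaK S x0) = 0.
    rewrite (fcp_capB (HP x0) (subsetIr _ _) sBx nBx).
    have -> : A :&: D :&: OmegaK S x0 :&: (B :&: OmegaK S x0) = set0.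
      apply/eqP; rewrite -subset0 -h0 -ODB; apply: setSI; apply: setSI; exact: subsetIr.
    exact: (fcp_empty (HP x0) sBx nBx).
  by rewrite e1 e2 Rmult_0_r.
Qed.

Lemma sum_single (C : finType) (Om : {set C}) (F : C -> R) x0 :
  x0 \in Om -> (forall x, x \in Om -> x != x0 -> F x = 0) ->
  \big[Rplus/0]_(x in Om) F x = F x0.
Proof.
move=> x0O H; rewrite (bigD1 x0 x0O) big1 /=; first lra.
by move=> x /andP[xO nx]; apply: H.
Qed.

Lemma Pc_single (V : finType) (X : V -> finType) (S : {set V}) (y : conf X) Q Px
  (HQ : fcp (OmegaK (~: S) y) Q) (HP : forall x : conf X, fcp (OmegaK S x) (Px x))
  (x0 : conf X) (A B : {set conf X}) :
  x0 \in OmegaK (~: S) y -> B \subset OmegaK S x0 -> B != set0 ->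
  Pc S y Q Px A B = Px x0 (A :&: OmegaK S x0) B.
Proof.
move=> x0O sB nB.
have pB : projT S y B = [set x0].
  apply/setP=> x; rewrite inE; apply/imsetP/eqP => [[w wB ->]|->].
    by apply/eqP; rewrite -(inOS_mrg _ x0O) (subsetP sB).
  case/set0Pn: nB => w wB; exists w => //.
  by apply/esym/eqP; rewrite -(inOS_mrg _ x0O) (subsetP sB).
have Q1 : Q [set x0] [set x0] = 1.
  have s1 : [set x0] \subset OmegaK (~: S) y by rewrite sub1set.
  have n1 : [set x0] != set0 by apply/set0Pn; exists x0; rewrite inE.
  by have [] := HQ _ _ _ s1 s1 s1 n1.
have Qo : forall x, x \in OmegaK (~: S) y -> x != x0 -> Q [set x] [set x0] = 0.
  move=> x xO nx; rewrite -pB (Q0 HQ xO) // pB inE //.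
have sBO : B :&: OmegaK S x0 = B by apply/setIidPl.
have ND : Nsum S y Q Px B = wgt S Px x0 B.
  rewrite /Nsum pB (sum_single x0O); first by rewrite Q1 Rmult_1_l.
  by move=> x xO nx; rewrite Qo // Rmult_0_l.
have NU : numr S y Q Px A B = wgt S Px x0 (A :&: B).
  rewrite /numr pB (sum_single x0O); first by rewrite Q1 Rmult_1_l.
  by move=> x xO nx; rewrite Qo // Rmult_0_l.
rewrite /Pc; case: Rlt_dec => h /=.
  rewrite NU ND /wgt.
  have [_ _ _ _ Hp] := HP x0 (A :&: OmegaK S x0) (OmegaK S x0) B (subsetIr _ _) (subxx _) sB (OS_n0 S x0).
  have -> : A :&: B :&: OmegaK S x0 = A :&: OmegaK S x0 :&: B.
    by rewrite -setIA sBO setIC -setIA [OmegaK S x0 :&: _]setIC sBO setIC.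
  have nBO : B :&: OmegaK S x0 != set0 by rewrite sBO.
  rewrite (Hp nBO) !sBO.
  move: h; rewrite ND /wgt sBO => h; field; lra.
have [xp _ _ _] := xs_props HQ nB.
move: xp; rewrite pB inE => /eqP ->.
by rewrite sBO.
Qed.

Lemma agree_OS (V : finType) (X : V -> finType) (S N : {set V}) (z x w : conf X) :
  N \subset ~: S -> w \in OmegaK S x -> agree N z w = agree N z x.
Proof.
move=> sN /inOmP wx; apply/forallP/forallP => H v; have := H v;
  case: (boolP (v \in N)) => //= vN; have vS : v \notin S by have := subsetP sN v vN; rewrite inE.
  by rewrite wx.
by rewrite wx.
Qed.

Lemma projT_cyl (V : finType) (X : V -> finType) (S N : {set V}) (y z : conf X) :
  N \subset ~: S ->
  projT S y [set w | agree N z w] = [set x in OmegaK (~: S) y | agree N z x].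
Proof.
move=> sN; apply/setP=> x; rewrite inE.
case: (boolP (x \in OmegaK (~: S) y)) => xO /=; last first.
  by apply/negbTE; apply: contra xO; apply: (subsetP (projT_sub S y _)).
rewrite (in_projT _ xO); apply/set0Pn/idP => [[w]|ax].
  by rewrite in_setI inE => /andP[aw wx]; rewrite -(agree_OS z sN wx).
by exists x; rewrite in_setI inE ax OS_self.
Qed.

Lemma Pc_T_eval (V : finType) (X : V -> finType) (S : {set V}) (y : conf X) Q Px
  (HQ : fcp (OmegaK (~: S) y) Q) (HP : forall x : conf X, fcp (OmegaK S x) (Px x))
  (N : {set V}) (z : conf X) (t : V) (a : X t) :
  N \subset ~: S -> t \notin S ->
  Pc S y Q Px [set w : conf X | w t == a] [set w | agree N z w] =
  Q [set x in OmegaK (~: S) y | x t == a] [set x in OmegaK (~: S) y | agree N z x].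
Proof.
move=> sN tS.
set B := [set w | agree N z w].
have pB : projT S y B = [set x in OmegaK (~: S) y | agree N z x] := projT_cyl y z sN.
have nB : B != set0 by apply/set0Pn; exists z; rewrite inE; apply/forallP => v; apply/implyP.
have sp := projT_sub S y B; have np := projT_n0 S y nB.
have Qout : forall x, x \in OmegaK (~: S) y -> ~~ agree N z x -> Q [set x] (projT S y B) = 0.
  by move=> x xO nx; rewrite (Q0 HQ xO) // pB inE xO.
have inB : forall x w, agree N z x -> w \in OmegaK S x -> w \in B.
  by move=> x w ax wx; rewrite inE (agree_OS z sN wx).
have ND : Nsum S y Q Px B = 1.
  have [_ H1 _ _ _] := HQ _ _ _ sp sp sp np.
  rewrite -H1 (fcp_sum1 HQ sp np (subxx _)) /Nsum; apply: eq_bigr => x xO.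
  case: (boolP (agree N z x)) => ax; last by rewrite Qout // Rmult_0_l.
  rewrite (wgt_1 HP) ?Rmult_1_r //; apply/subsetP => w; exact: inB.
rewrite /Pc ND; case: Rlt_dec => h /=; last lra.
rewrite /Rdiv Rinv_1 Rmult_1_r -pB.
have sA : [set x in OmegaK (~: S) y | x t == a] \subset OmegaK (~: S) y.
  by apply/subsetP => x; rewrite inE => /andP[].
rewrite (fcp_sum1 HQ sp np sA) /numr.
rewrite [LHS](bigID (fun x : conf X => x t == a)) /=.
have -> : \big[Rplus/0]_(i in OmegaK (~: S) y | ~~ (i t == a)) (Q [set i] (projT S y B) *
      wgt S Px i ([set w : conf X | w t == a] :&: B)) = 0.
  rewrite big1 // => x /andP[xO xa].
  case: (boolP (agree N z x)) => ax; last by rewrite Qout // Rmult_0_l.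
  rewrite (wgt_0 HP) ?Rmult_0_r //; apply/setP => w; rewrite !inE.
  apply/negbTE; apply/negP => /andP[/andP[/eqP wa _] /forallP wx].
  have := wx t; rewrite tS /= => /eqP wtx.
  by move: xa; rewrite -wa wtx eqxx.
rewrite Rplus_0_r; apply: eq_big => [x|x /andP[xO xa]].
  by rewrite [RHS]inE.
case: (boolP (agree N z x)) => ax; last by rewrite Qout // Rmult_0_l.
rewrite (wgt_1 HP) ?Rmult_1_r //; apply/subsetP => w wx; rewrite in_setI (inB x w ax wx) inE.
by move/inOmP: wx => /(_ t tS) ->; rewrite (eqP xa) eqxx.
Qed.

Lemma projT_setT (V : finType) (X : V -> finType) (S : {set V}) (y : conf X) :
  projT S y setT = OmegaK (~: S) y.
Proof.
apply/eqP; rewrite eqEsubset projT_sub /=; apply/subsetP => x xO.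
by apply/imsetP; exists x; rewrite ?in_setT ?mrg_id.
Qed.

Lemma wgt_expect (V : finType) (X : V -> finType) (S : {set V}) Px
  (HP : forall x : conf X, fcp (OmegaK S x) (Px x)) (f : conf X -> R) x :
  \big[Rplus/0]_(z in [set: conf X]) (f z * wgt S Px x [set z]) = expect (OmegaK S x) (Px x) f.
Proof.
rewrite /expect [RHS]big_mkcond /=; apply: eq_big => [z|z _]; first by rewrite in_setT.
case: ifP => zx.
  by rewrite /wgt (setIidPl _) // sub1set.
rewrite (wgt_0 HP) ?Rmult_0_r //; apply/setP => w; rewrite !inE.
by apply/negbTE/negP => /andP[/eqP -> h]; move: zx; rewrite inOm h.
Qed.

Lemma Pc_expect (V : finType) (X : V -> finType) (S : {set V}) (y : conf X) Q Px
  (HQ : fcp (OmegaK (~: S) y) Q) (HP : forall x : conf X, fcp (OmegaK S x) (Px x))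
  (f : conf X -> R) :
  expect setT (Pc S y Q Px) f =
  \big[Rplus/0]_(x in OmegaK (~: S) y) (Q [set x] (OmegaK (~: S) y) * expect (OmegaK S x) (Px x) f).
Proof.
have nT : [set: conf X] != set0 by apply/set0Pn; exists y.
have sO := subxx (OmegaK (~: S) y).
have nO : OmegaK (~: S) y != set0 by rewrite -projT_setT; apply: projT_n0.
have ND : Nsum S y Q Px setT = 1.
  have [_ H1 _ _ _] := HQ _ _ _ sO sO sO nO.
  rewrite -H1 (fcp_sum1 HQ sO nO sO) /Nsum projT_setT; apply: eq_bigr => x xO.
  by rewrite (wgt_1 HP) ?Rmult_1_r // subsetT.
have PE : forall z, Pc S y Q Px [set z] setT =
   \big[Rplus/0]_(x in OmegaK (~: S) y) (Q [set x] (OmegaK (~: S) y) * wgt S Px x [set z]).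
  move=> z; rewrite /Pc ND; case: Rlt_dec => h /=; last lra.
  by rewrite /Rdiv Rinv_1 Rmult_1_r /numr projT_setT setIT.
rewrite /expect.
under eq_bigr => z _ do rewrite PE Rsum_mull.
rewrite exchange_big /=; apply: eq_bigr => x xO.
have := wgt_expect HP f x; rewrite /expect => <-.
rewrite Rsum_mull; apply: eq_bigr => z _; ring.
Qed.

Lemma condS_set (V : finType) (X : V -> finType) (S NG N1 : {set V}) (y x z : conf X) :
  (forall v, (v \in NG) = (v \notin S) || (v \in N1)) -> z \in OmegaK S x ->
  [set w in OmegaK setT y | agree NG z w] = [set w in OmegaK S x | agree N1 z w].
Proof.
move=> HN /inOmP zx; rewrite OmT; apply/setP => w; rewrite !inE /=.
apply/forallP/andP => [H|[/forallP wx /forallP H] v].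
  split; apply/forallP => v; apply/implyP => vA; have := H v; rewrite HN.
    by rewrite vA /= => /eqP <-; rewrite zx.
  by rewrite vA orbT.
rewrite HN; apply/implyP => /orP[vS|vN].
  by have := wx v; rewrite vS /= => /eqP ->; rewrite zx.
by have := H v; rewrite vN.
Qed.

Definition ext (V : finType) (X : V -> finType) (S : {set V}) (y : conf X) (A : {set conf X}) :
  {set conf X} := [set z | mrg S y z \in A].

Lemma ext_OT (V : finType) (X : V -> finType) (S : {set V}) (y : conf X) :
  ext S y (OmegaK (~: S) y) = setT.
Proof. by apply/setP => z; rewrite inE in_setT mrg_OT. Qed.

Lemma ext_n0 (V : finType) (X : V -> finType) (S : {set V}) (y : conf X) (B : {set conf X}) :
  B \subset OmegaK (~: S) y -> B != set0 -> ext S y B != set0.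
Proof.
move=> sB /set0Pn[x xB]; apply/set0Pn; exists x.
by rewrite inE mrg_id // (subsetP sB).
Qed.

Lemma ext_I (V : finType) (X : V -> finType) (S : {set V}) (y : conf X) (A B : {set conf X}) :
  ext S y (A :&: B) = ext S y A :&: ext S y B.
Proof. by apply/setP => z; rewrite !inE. Qed.

Lemma ext_U (V : finType) (X : V -> finType) (S : {set V}) (y : conf X) (A B : {set conf X}) :
  ext S y (A :|: B) = ext S y A :|: ext S y B.
Proof. by apply/setP => z; rewrite !inE. Qed.

Lemma ext_0 (V : finType) (X : V -> finType) (S : {set V}) (y : conf X) :
  ext S y set0 = set0.
Proof. by apply/setP => z; rewrite !inE. Qed.

Lemma ext_1 (V : finType) (X : V -> finType) (S : {set V}) (y x : conf X) :
  x \in OmegaK (~: S) y -> ext S y [set x] = OmegaK S x.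
Proof. by move=> xO; apply/setP => z; rewrite (inOS_mrg _ xO) !inE. Qed.

Lemma fcp_marg (V : finType) (X : V -> finType) (S : {set V}) (y : conf X) P :
  fcp setT P -> fcp (OmegaK (~: S) y) (fun A B => P (ext S y A) (ext S y B)).
Proof.
move=> HP A B D sA sB sD nB.
have [h1 h2 h3 h4 h5] := HP (ext S y A) (ext S y B) (ext S y D) (subsetT _) (subsetT _) (subsetT _)
  (ext_n0 sB nB).
split => //.
- by rewrite ext_OT.
- move=> dAD; rewrite ext_U h4 //.
  by rewrite -setI_eq0 -ext_I; move: dAD; rewrite -setI_eq0 => /eqP ->; rewrite ext_0.
- move=> nDB; rewrite ext_I h5 -?ext_I //.
  apply: ext_n0 nDB; exact: subset_trans (subsetIl _ _) sD.
Qed.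

Lemma fcp_restr (C : finType) (P : {set C} -> {set C} -> R) (Om : {set C}) :
  fcp setT P -> fcp Om P.
Proof.
move=> HP A B D sA sB sD nB.
have [h1 h2 h3 h4 h5] := HP A B D (subsetT _) (subsetT _) (subsetT _) nB.
split => //.
by rewrite (fcp_capB HP (subsetT _) (subsetT _) nB) (setIidPr sB).
Qed.

Lemma marg_expect (V : finType) (X : V -> finType) (S : {set V}) (y : conf X) P
  (HP : fcp setT P) (f : conf X -> R) :
  expect setT P f =
  \big[Rplus/0]_(x in OmegaK (~: S) y) (P (OmegaK S x) setT * expect (OmegaK S x) P f).
Proof.
have nT : [set: conf X] != set0 by apply/set0Pn; exists y.
have PE : forall z, P [set z] setT =
    \big[Rplus/0]_(x in OmegaK (~: S) y) (P (OmegaK S x) setT * P [set z] (OmegaK S x)).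
  move=> z; rewrite (sum_single (mrg_OT S y z)).
    have zx : z \in OmegaK S (mrg S y z) by rewrite (inOS_mrg _ (mrg_OT S y z)).
    have [_ _ _ _ Hp] := HP [set z] setT (OmegaK S (mrg S y z)) (subsetT _) (subsetT _) (subsetT _) nT.
    have e1 : [set z] :&: OmegaK S (mrg S y z) = [set z] by apply/setIidPl; rewrite sub1set.
    rewrite e1 setIT in Hp; rewrite Hp; first ring.
    exact: OS_n0.
  move=> x xO nx.
  rewrite (fcp_single0 HP) ?Rmult_0_r ?OS_n0 ?subsetT ?in_setT //.
  by rewrite (inOS_mrg _ xO); apply/eqP => e; move: nx; rewrite -e eqxx.
rewrite /expect.
under eq_bigr => z _ do rewrite PE Rsum_mull.
rewrite exchange_big /=; apply: eq_bigr => x xO.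
rewrite Rsum_mull [RHS]big_mkcond /=; apply: eq_big => [z|z _]; first by rewrite in_setT.
case: ifP => zx; first by unfold reverse_coercion; ring.
rewrite (fcp_single0 HP) ?OS_n0 ?subsetT ?in_setT ?zx //; ring.
Qed.

Lemma agree_mrgr (V : finType) (X : V -> finType) (S N : {set V}) (y z w : conf X) :
  N \subset ~: S -> agree N z (mrg S y w) = agree N z w.
Proof.
move=> sN; apply: eq_forallb => v; case: (boolP (v \in N)) => //= vN.
have : v \in ~: S := subsetP sN v vN; rewrite inE => vS.
by rewrite mrgE (negbTE vS).
Qed.

Lemma agree_mrgl (V : finType) (X : V -> finType) (S N : {set V}) (y z w : conf X) :
  N \subset ~: S -> agree N (mrg S y z) w = agree N z w.
Proof.
move=> sN; apply: eq_forallb => v; case: (boolP (v \in N)) => //= vN.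
have : v \in ~: S := subsetP sN v vN; rewrite inE => vS.
by rewrite mrgE (negbTE vS).
Qed.

Lemma ND_sub (V : finType) (par : V -> {set V}) (K : {set V}) s :
  NondescK par K s \subset K.
Proof. exact: subsetDl. Qed.

Lemma inf_transfer (A B : R -> Prop) (r : R) :
  (forall e, A e -> exists e', B e' /\ e' <= e) ->
  (forall e', B e' -> forall eps, 0 < eps -> exists e, A e /\ e <= e' + eps) ->
  (is_inf A r <-> is_inf B r).
Proof.
move=> H1 H2; split => [[lb gr]|[lb gr]]; split.
- move=> e' Be'; apply: Rnot_lt_le => h.
  have [e [Ae le]] := H2 e' Be' ((r - e') / 2) ltac:(lra).
  have := lb e Ae; lra.
- move=> r' lr'; apply: gr => e Ae.
  have [e' [Be' le]] := H1 e Ae; have := lr' e' Be'; lra.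
- move=> e Ae; have [e' [Be' le]] := H1 e Ae; have := lb e' Be'; lra.
- move=> r' lr'; apply: gr => e' Be'; apply: Rnot_lt_le => h.
  have [e [Ae le]] := H2 e' Be' ((r' - e') / 2) ltac:(lra).
  have := lr' e Ae; lra.
Qed.

Lemma inf_approx (A : R -> Prop) (r eps : R) :
  is_inf A r -> 0 < eps -> exists e, A e /\ e <= r + eps.
Proof.
move=> [lb gr] he; apply: NNPP => hn.
have : r + eps <= r.
  apply: gr => e Ae; apply: Rnot_lt_le => h; apply: hn; exists e; split => //; lra.
lra.
Qed.

Lemma M_congr (T : Type) (Mp : T -> Prop) (F G : T) : F = G -> Mp F -> Mp G.
Proof. by move=> ->. Qed.

Lemma setinT (T : finType) (p : pred T) : [set w in [set: T] | p w] = [set w | p w].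
Proof. by apply/setP => w; rewrite !inE. Qed.

Lemma ext_sel (V : finType) (X : V -> finType) (S : {set V}) (y : conf X) (t : V) (a : X t) :
  t \notin S -> ext S y [set w in OmegaK (~: S) y | w t == a] = [set w : conf X | w t == a].
Proof.
move=> tS; apply/setP => w; rewrite /ext [in LHS]inE [in LHS]inE mrg_OT /=.
by rewrite mrgE (negbTE tS) inE.
Qed.

Lemma ext_agr (V : finType) (X : V -> finType) (S N : {set V}) (y z : conf X) :
  N \subset ~: S -> ext S y [set w in OmegaK (~: S) y | agree N z w] = [set w | agree N z w].
Proof.
move=> sN; apply/setP => w; rewrite /ext [in LHS]inE [in LHS]inE mrg_OT /=.
by rewrite agree_mrgr // inE.
Qed.

Lemma marg_irrT (V : finType) (X : V -> finType) (par : V -> {set V})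
  (M : forall s : V, conf X -> (X s -> R) -> Prop)
  (Hdag : acyclic par) (S : {set V})
  (HST : forall t s, t \in ~: S -> s \in S -> belowK par setT t s)
  (y : conf X) P :
  irr_ext par M setT y P -> irr_ext par M (~: S) y (fun A B => P (ext S y A) (ext S y B)).
Proof.
move=> [HPf HPc]; rewrite OmT in HPf; split; first exact: fcp_marg.
move=> t z tT zO; have := HPc t z (in_setT t); rewrite OmT in_setT => /(_ isT) H.
have eN : NondescK par setT t = NondescK par (~: S) t by apply/setP => v; exact: NG_T.
have sN := ND_sub par (~: S) t.
have tS : t \notin S by move: tT; rewrite inE.
apply: (M_congr _ H); apply: functional_extensionality => a.
by rewrite (ext_sel y a tS) (ext_agr y z sN) eN !setinT.
Qed.

Lemma marg_irrS (V : finType) (X : V -> finType) (par : V -> {set V})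
  (M : forall s : V, conf X -> (X s -> R) -> Prop)
  (Hdag : acyclic par) (S : {set V})
  (HST : forall t s, t \in ~: S -> s \in S -> belowK par setT t s)
  (y : conf X) P (x : conf X) :
  irr_ext par M setT y P -> irr_ext par M S x P.
Proof.
move=> [HPf HPc]; have HP : fcp setT P by rewrite -(OmT y).
split; first exact: fcp_restr.
move=> s z sS zx; have := HPc s z (in_setT s); rewrite {1}OmT in_setT => /(_ isT) H.
have eB := condS_set y (fun v => NG_S Hdag HST v sS) zx.
rewrite eB in H.
set B := [set w in OmegaK S x | agree (NondescK par S s) z w] in H *.
have nB : B != set0.
  by apply/set0Pn; exists z; rewrite inE zx; apply/forallP => v; apply/implyP.
have sB : B \subset OmegaK S x by apply/subsetP => w; rewrite inE => /andP[].
apply: (M_congr _ H); apply: functional_extensionality => a.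
rewrite (fcp_capB HP (subsetT _) (subsetT _) nB) [RHS](fcp_capB HP (subsetT _) (subsetT _) nB).
congr (P _ B); apply/setP => w; rewrite !in_setI; case: (boolP (w \in B)) => wB; rewrite ?andbF //.
rewrite !andbT OmT !inE.
by have := subsetP sB w wB; rewrite inOm => ->.
Qed.

Lemma Pc_irr (V : finType) (X : V -> finType) (par : V -> {set V})
  (M : forall s : V, conf X -> (X s -> R) -> Prop)
  (Hdag : acyclic par) (HM : local_models par M) (S : {set V})
  (HST : forall t s, t \in ~: S -> s \in S -> belowK par setT t s)
  (y : conf X) Q Px :
  irr_ext par M (~: S) y Q -> (forall x, irr_ext par M S x (Px x)) ->
  irr_ext par M setT y (Pc S y Q Px).
Proof.
move=> [HQ HQc] HPx.
have HP : forall x, fcp (OmegaK S x) (Px x) by move=> x; case: (HPx x).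
split; first by rewrite OmT; exact: Pc_fcp.
move=> s z _ _; rewrite OmT.
case: (boolP (s \in S)) => sS.
  set x0 := mrg S y z.
  have x0O : x0 \in OmegaK (~: S) y := mrg_OT S y z.
  have zx : z \in OmegaK S x0 by rewrite (inOS_mrg _ x0O).
  have H := (HPx x0).2 s z sS zx.
  have eB := condS_set y (fun v => NG_S Hdag HST v sS) zx.
  rewrite OmT in eB; rewrite eB.
  set B := [set w in OmegaK S x0 | agree (NondescK par S s) z w] in H *.
  have nB : B != set0.
    by apply/set0Pn; exists z; rewrite inE zx; apply/forallP => v; apply/implyP.
  have sB : B \subset OmegaK S x0 by apply/subsetP => w; rewrite inE => /andP[].
  apply: (M_congr _ H); apply: functional_extensionality => a.
  rewrite (Pc_single HQ HP _ x0O sB nB); congr (Px x0 _ B).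
  by apply/setP => w; rewrite !inE andbC.
have sT : s \in ~: S by rewrite inE.
set z' := mrg S y z.
have z'O : z' \in OmegaK (~: S) y := mrg_OT S y z.
have H := HQc s z' sT z'O.
have eN : NondescK par setT s = NondescK par (~: S) s by apply/setP => v; exact: NG_T.
have sN := ND_sub par (~: S) s.
have Hpar : forall u, u \in par s -> z' u = z u.
  move=> u us; have := par_T Hdag HST sT us; rewrite inE => uS.
  by rewrite /z' mrgE (negbTE uS).
apply/((HM s).2 z' z Hpar).
apply: (M_congr _ H); apply: functional_extensionality => a.
rewrite eN !setinT (Pc_T_eval HQ HP z a sN sS).
congr (Q _ _); apply/setP => w; rewrite !inE /z' agree_mrgl //.
Qed.

Unset Implicit Arguments.
Theorem theorem3 (V : finType) (X : V -> finType) (par : V -> {set V})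
  (M : forall s : V, conf X -> (X s -> R) -> Prop)
  (HX : forall s, (0 < #|X s|)%N)
  (Hdag : acyclic par)
  (HM : local_models par M)
  (S : {set V})
  (HST : forall t s, t \in ~: S -> s \in S -> belowK par setT t s)
  (f : conf X -> R) (g : conf X -> R)
  (Hg : forall x : conf X, lower_exp par M S x f (g x))
  (y : conf X) (r : R) :
  lower_exp par M setT y f r <-> lower_exp par M (~: S) y g r.
Proof.
apply: inf_transfer.
- move=> e [P [HPi ->]].
  have HPf : fcp setT P by case: HPi; rewrite OmT.
  exists (expect (OmegaK (~: S) y) (fun A B => P (ext S y A) (ext S y B)) g); split.
    by exists (fun A B => P (ext S y A) (ext S y B)); split => //; exact: marg_irrT.
  rewrite OmT (marg_expect S y HPf f) /expect /=.
  apply: Rsum_le => x xO; rewrite ext_1 // ext_OT.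
  have h1 : g x <= expect (OmegaK S x) P f.
    by apply: (Hg x).1; exists P; split => //; exact: (@marg_irrS _ _ par M Hdag S HST y P x HPi).
  have h2 : 0 <= P (OmegaK S x) setT.
    exact: (fcp_ge0 HPf (subsetT _) (subsetT _) (ltac:(by apply/set0Pn; exists y))).
  rewrite /expect in h1; rewrite Rmult_comm; exact: Rmult_le_compat_l h2 h1.
- move=> e' [Q [HQi ->]] eps heps.
  have ex : forall x, exists P, irr_ext par M S x P /\ expect (OmegaK S x) P f <= g x + eps.
    move=> x; have [e [[P [HP ->]] le]] := inf_approx (Hg x) heps.
    by exists P.
  pose Px x := proj1_sig (constructive_indefinite_description _ (ex x)).
  have HPx : forall x, irr_ext par M S x (Px x) /\ expect (OmegaK S x) (Px x) f <= g x + eps.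
    move=> x; exact: (proj2_sig (constructive_indefinite_description _ (ex x))).
  have HQ : fcp (OmegaK (~: S) y) Q by case: HQi.
  have HP : forall x, fcp (OmegaK S x) (Px x) by move=> x; case: (HPx x) => [[]].
  exists (expect (OmegaK setT y) (Pc S y Q Px) f); split.
    exists (Pc S y Q Px); split => //.
    by apply: Pc_irr => // x; case: (HPx x).
  rewrite OmT (Pc_expect HQ HP f).
  have sO := subxx (OmegaK (~: S) y).
  have nO : OmegaK (~: S) y != set0 by apply/set0Pn; exists y; apply/inOmP.
  have [_ H1 _ _ _] := HQ _ _ _ sO sO sO nO.
  rewrite (fcp_sum1 HQ sO nO sO) in H1.
  rewrite /expect -(Rmult_1_r eps) -H1 Rsum_mull -big_split /=.
  apply: Rsum_le => x xO.
  have q0 : 0 <= Q [set x] (OmegaK (~: S) y).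
    by apply: (fcp_ge0 HQ) => //; rewrite sub1set.
  have := (HPx x).2; rewrite /expect => h.
  rewrite -Rmult_plus_distr_r [X in _ <= X]Rmult_comm; exact: Rmult_le_compat_l q0 h.
Qed.
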